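(* Let $m\ge 3$, $n\ge 2$, let $\mathcal{C}^3_{m,n}=(V_1,V_2,E)$, and let $e\in E$ be a hyperedge containing exactly two vertices of $V_1$ and one vertex of $V_2$. Then the Seidel spectrum of $\mathcal{C}^3_{m,n}-e$ consists of the eigenvalue $2n-1$ with multiplicity $m-3$, the eigenvalue $2m-1$ with multiplicity $n-2$, and the five roots $\tau_1,\dots,\tau_5$ of $\xi_2(\tau)=0$, where \begin{align*} \xi_2(\tau)={}&-\tau^5+(-5+5m+7n-4mn)\tau^4\\ &+(46+4m-8m^2+4n-22mn-6m^2n+4m^3n-18n^2+2mn^2+4m^2n^2+4mn^3)\tau^3\\ &+(286-206m+8m^2+4m^3-234n+62mn-10m^2n+40m^3n-8m^4n-46n^2-10mn^2\\ &\quad+64m^2n^2-24m^3n^2+36n^3+52mn^3-24m^2n^3-16mn^4)\tau^2\\ &+(83-228m-40m^2+40m^3+76n-90mn+246m^2n-28m^3n-16m^4n-366n^2+238mn^2\\ &\quad+132m^2n^2-160m^3n^2+32m^4n^2+248n^3+20mn^3-184m^2n^3+48m^3n^3-40n^4\\ &\quad-88mn^4+48m^2n^4+16mn^5)\tau\\ &+(-921+873m-408m^2+84m^3+2387n-2250mn+1274m^2n-368m^3n+24m^4n-2322n^2\\ &\quad+1994mn^2-680m^2n^2+40m^3n^2+32m^4n^2+1012n^3-732mn^3-160m^2n^3\\ &\quad+160m^3n^3-32m^4n^3-168n^4+72mn^4+160m^2n^4-32m^3n^4+16mn^5-32m^2n^5). \end{align*}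
   Context: For a hypergraph $\mathcal{H}$ and distinct vertices $i,j$, the co-degree $c_{ij}$ is the number of hyperedges containing both $i$ and $j$. The Seidel matrix $\mathcal{S}(\mathcal{H})$ has zero diagonal and $(i,j)$-entry $1-2c_{ij}$ for $i\neq j$; its eigenvalues (with multiplicity) form the Seidel spectrum of $\mathcal{H}$. The complete $3$-uniform bipartite hypergraph $\mathcal{C}^3_{m,n}=(V_1,V_2,E)$ has vertex set $V_1\sqcup V_2$, $|V_1|=m$, $|V_2|=n$, and $E$ = all $3$-subsets meeting both $V_1$ and $V_2$. For a hyperedge $e$, $\mathcal{H}-e$ denotes the hypergraph with the same vertex set and hyperedge set $E\setminus\{e\}$. *)

(* Defs.v *)
From HB Require Import structures.
From mathcomp Require Import all_boot all_order all_algebra.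
Set Implicit Arguments. Unset Strict Implicit. Unset Printing Implicit Defensive.
Import Order.TTheory GRing.Theory Num.Theory.
Local Open Scope ring_scope.

Definition codegree (k : nat) (E : {set {set 'I_k}}) (i j : 'I_k) : nat :=
  #|[set f in E | (i \in f) && (j \in f)]|.

Definition seidel_matrix (R : nzRingType) (k : nat) (E : {set {set 'I_k}})
  : 'M[R]_k :=
  \matrix_(i, j) (if i == j then 0 else 1 - 2 * (codegree E i j)%:R).

Definition V1 (m n : nat) : {set 'I_(m + n)} := [set i : 'I_(m + n) | (i < m)%N].
Definition V2 (m n : nat) : {set 'I_(m + n)} := [set i : 'I_(m + n) | (m <= i)%N].

Definition complete_bip3 (m n : nat) : {set {set 'I_(m + n)}} :=
  [set f : {set 'I_(m + n)} | [&& #|f| == 3%N, f :&: V1 m n != set0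
                                & f :&: V2 m n != set0]].

Definition xi2 (R : comNzRingType) (m0 n0 : nat) : {poly R} :=
  let m : R := m0%:R in let n : R := n0%:R in
  let c5 := -1 in
  let c4 := -5 + 5* m + 7* n - 4* m* n in
  let c3 := 46 + 4* m - 8* m^+2 + 4* n - 22* m* n - 6* m^+2* n + 4* m^+3* n - 18* n^+2
            + 2* m* n^+2 + 4* m^+2* n^+2 + 4* m* n^+3 in
  let c2 := 286 - 206* m + 8* m^+2 + 4* m^+3 - 234* n + 62* m* n - 10* m^+2* n
            + 40* m^+3* n - 8* m^+4* n - 46* n^+2 - 10* m* n^+2
            + 64* m^+2* n^+2 - 24* m^+3* n^+2 + 36* n^+3 + 52* m* n^+3 - 24* m^+2* n^+3
            - 16* m* n^+4 in
  let c1 := 83 - 228* m - 40* m^+2 + 40* m^+3 + 76* n - 90* m* n + 246* m^+2* n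
            - 28* m^+3* n - 16* m^+4* n - 366* n^+2 + 238* m* n^+2
            + 132* m^+2* n^+2 - 160* m^+3* n^+2 + 32* m^+4* n^+2 + 248* n^+3 + 20* m* n^+3
            - 184* m^+2* n^+3 + 48* m^+3* n^+3 - 40* n^+4
            - 88* m* n^+4 + 48* m^+2* n^+4 + 16* m* n^+5 in
  let c0 := -921 + 873* m - 408* m^+2 + 84* m^+3 + 2387* n - 2250* m* n + 1274* m^+2* n
            - 368* m^+3* n + 24* m^+4* n - 2322* n^+2
            + 1994* m* n^+2 - 680* m^+2* n^+2 + 40* m^+3* n^+2 + 32* m^+4* n^+2
            + 1012* n^+3 - 732* m* n^+3 - 160* m^+2* n^+3
            + 160* m^+3* n^+3 - 32* m^+4* n^+3 - 168* n^+4 + 72* m* n^+4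
            + 160* m^+2* n^+4 - 32* m^+3* n^+4 + 16* m* n^+5 - 32* m^+2* n^+5 in
  c5%:P * 'X^5 + c4%:P * 'X^4 + c3%:P * 'X^3 + c2%:P * 'X^2 + c1%:P * 'X + c0%:P.

(* Main.v *)
Require Import Defs.
From HB Require Import structures.
From mathcomp Require Import all_boot all_order all_algebra.
Import Order.TTheory GRing.Theory Num.Theory.
Local Open Scope ring_scope.
From mathcomp Require Import zify ring lra.

Lemma sylvester (F : comNzRingType) (k r : nat) (A : 'M[F]_(k, r)) (B : 'M[F]_(r, k)) :
  \det (1%:M + A *m B) = \det (1%:M + B *m A).
Proof.
have E1 : block_mx (1%:M : 'M_k) (- A) B (1%:M : 'M_r)
   = block_mx 1%:M 0 B 1%:M *m block_mx 1%:M (- A) 0 (1%:M + B *m A).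
  rewrite mulmx_block !mul1mx !mul0mx !mulmx1 ?addr0 ?add0r mulmxN.
  by rewrite (addrC 1%:M) addKr.
have E2 : block_mx (1%:M : 'M_k) (- A) B (1%:M : 'M_r)
   = block_mx (1%:M + A *m B) (- A) 0 1%:M *m block_mx 1%:M 0 B 1%:M.
  by rewrite mulmx_block !mul1mx !mul0mx !mulmx0 !mulmx1 ?addr0 !add0r mulNmx addrK.
have := congr1 determinant (etrans (esym E2) E1).
by rewrite !det_mulmx !det_lblock !det_ublock !det1 !mul1r ?mulr1.
Qed.

Lemma sum_delta (F : nzRingType) r (a : 'I_r) (f : 'I_r -> F) :
  \sum_p (a == p)%:R * f p = f a.
Proof.
rewrite (bigD1 a) //= eqxx mul1r big1 ?addr0 // => p.
by rewrite eq_sym => /negPf ->; rewrite mul0r.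
Qed.

Lemma sum_delta_r (F : nzRingType) r (a : 'I_r) (f : 'I_r -> F) :
  \sum_p f p * (p == a)%:R = f a.
Proof.
rewrite (bigD1 a) //= eqxx mulr1 big1 ?addr0 // => p /negPf ->.
by rewrite mulr0.
Qed.

Lemma class_det (F : fieldType) k r (c : 'I_k -> 'I_r) (d : 'I_r -> F) (K : 'M[F]_r) :
  (forall p, d p != 0) ->
  \det (\matrix_(i, j) ((i == j)%:R * d (c i) + K (c i) (c j)) : 'M_k)
  = (\prod_p d p ^+ #|[pred i | c i == p]|) * (\prod_p (d p)^-1) *
    \det (\matrix_(p, q) ((p == q)%:R * d p + #|[pred i | c i == p]|%:R * K p q)).
Proof.
move=> dnz.
pose P : 'M[F]_(k, r) := \matrix_(i, p) ((c i == p)%:R).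
pose D : 'M[F]_k := diag_mx (\row_i d (c i)).
pose Di : 'M[F]_k := diag_mx (\row_i (d (c i))^-1).
pose s p := #|[pred i | c i == p]|.
have PK : forall i q, (P *m K) i q = K (c i) q.
  by move=> i q; rewrite mxE; under eq_bigr do rewrite mxE; rewrite sum_delta.
have EM : \matrix_(i, j) ((i == j)%:R * d (c i) + K (c i) (c j))
          = D *m (1%:M + (Di *m P *m K) *m P^T).
  apply/matrixP => i j; rewrite mulmxDr mulmx1 -!mulmxA mul_diag_mx mul_diag_mx !mxE.
  rewrite mulrA mulfV // mul1r; congr (_ + _).
    by rewrite eq_sym; case: eqP => _; rewrite ?mul1r ?mulr1 ?mul0r ?mulr0.
  under eq_bigr do rewrite mxE; rewrite sum_delta mxE.
  under eq_bigr do rewrite !mxE eq_sym.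
  by rewrite sum_delta_r.
have G : P^T *m (Di *m P) = diag_mx (\row_p ((s p)%:R * (d p)^-1)).
  apply/matrixP => p q; rewrite mul_diag_mx !mxE.
  under eq_bigr do rewrite !mxE.
  transitivity (\sum_(i in [pred i | c i == p]) ((p == q)%:R * (d p)^-1)).
    rewrite [RHS]big_mkcond /=; apply: eq_bigr => i _.
    rewrite inE; case: (c i =P p) => [->|]; rewrite ?mul1r ?mul0r //.
    by rewrite mulrC.
  rewrite sumr_const; have [_|_] := eqVneq p q; last by rewrite mul0r mul0rn mulr0n.
  by rewrite /= !mulr1n mul1r mulr_natl.
have EQ : 1%:M + diag_mx (\row_p ((s p)%:R * (d p)^-1)) *m K
          = diag_mx (\row_p (d p)^-1) *m
            \matrix_(p, q) ((p == q)%:R * d p + (s p)%:R * K p q).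
  apply/matrixP => p q; rewrite !mul_diag_mx !mxE.
  by rewrite mulrDr mulrCA mulVf // mulr1 [in RHS]mulrCA mulrA.
rewrite EM det_mulmx sylvester !mulmxA -(mulmxA P^T) G EQ det_mulmx !det_diag mulrA.
congr (_ * _ * _); last by apply: eq_bigr => p _; rewrite mxE.
  rewrite (partition_big c xpredT) //=; apply: eq_bigr => p _.
  under eq_bigr => i /eqP ci do rewrite mxE ci.
  by rewrite prodr_const.
Qed.
Lemma det4 (F : comNzRingType) (f : nat -> nat -> F) :
  \det (\matrix_(i, j) f (val i) (val j) : 'M_4) =
  let a i j := f i j in
  let d3 (r0 r1 r2 c0 c1 c2 : nat) :=
    a r0 c0 * (a r1 c1 * a r2 c2 - a r1 c2 * a r2 c1)
  - a r0 c1 * (a r1 c0 * a r2 c2 - a r1 c2 * a r2 c0)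
  + a r0 c2 * (a r1 c0 * a r2 c1 - a r1 c1 * a r2 c0) in
  a 0 0 * d3 1 2 3 1 2 3 - a 0 1 * d3 1 2 3 0 2 3
  + a 0 2 * d3 1 2 3 0 1 3 - a 0 3 * d3 1 2 3 0 1 2.
Proof.
rewrite /=.
repeat rewrite (expand_det_row _ ord0) /cofactor !big_ord_recl ?big_ord0.
repeat rewrite det_mx00.
rewrite !mxE /= /bump /=.
rewrite ?addn0 ?add0n ?add1n.
ring.
Qed.

Local Close Scope ring_scope.

Lemma card_V1 m n : #|V1 m n| = m.
Proof.
have -> : V1 m n = [set lshift n i | i : 'I_m].
  apply/setP => i; rewrite inE; apply/idP/imsetP => [lt|[j _ ->]].
    by exists (Ordinal lt) => //; apply/val_inj.
  by rewrite /= ltn_ord.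
by rewrite card_imset ?cardsT ?card_ord //; exact: lshift_inj.
Qed.

Lemma V2C m n : V2 m n = ~: V1 m n.
Proof. by apply/setP => i; rewrite !inE leqNgt. Qed.

Lemma card_V2 m n : #|V2 m n| = n.
Proof. have := cardsC (V1 m n); rewrite -V2C card_V1 card_ord; lia. Qed.

Lemma meet3 k (i j w : 'I_k) (V : {set 'I_k}) :
  ([set i; j; w] :&: V != set0) = [|| i \in V, j \in V | w \in V].
Proof.
apply/set0Pn/idP => [[x]|].
  rewrite !inE => /andP[]; rewrite -?orbA => /or3P[] /eqP -> ->; by rewrite ?orbT.
case/or3P => H; [exists i | exists j | exists w]; by rewrite !inE eqxx ?orbT H.
Qed.

Lemma card3 k (i j w : 'I_k) : i != j -> w != i -> w != j -> #|[set i; j; w]| = 3.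
Proof.
move=> ij wi wj.
have -> : [set i; j; w] = i |: (j |: [set w]) by apply/setP=> x; rewrite !inE ?orbA.
rewrite !cardsU1 cards1 !inE (negPf ij).
by rewrite /= eq_sym (negPf wi) eq_sym (negPf wj).
Qed.

Definition base m n (i j : 'I_(m+n)) : nat :=
  if (i < m) && (j < m) then n else if (m <= i) && (m <= j) then m else (m + n - 2)%N.

Lemma codeg_full m n (i j : 'I_(m+n)) : i != j ->
  codegree (complete_bip3 m n) i j = base m n i j.
Proof.
move=> ij.
pose W := [set w | [&& w != i, w != j & [set i; j; w] \in complete_bip3 m n]].
have E : [set f in complete_bip3 m n | (i \in f) && (j \in f)]
         = (fun w => [set i; j; w]) @: W.
  apply/setP => f; rewrite inE; apply/andP/imsetP.
  - move=> [fE /andP[fi fj]].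
    have c3 : #|f| = 3 by move: fE; rewrite inE => /and3P[/eqP].
    have : #|f :\ i :\ j| == 1.
      move: c3; rewrite (cardsD1 i) fi (cardsD1 j (f :\ i)) !inE eq_sym (negPf ij) fj /=.
      by case: #|_| => [|[|k]] //=.
    case/cards1P => w Hw.
    have wf : w \in f :\ i :\ j by rewrite Hw set11.
    move: (wf); rewrite !inE => /and3P[wj wi wf'].
    have fe : f = [set i; j; w].
      apply/setP => x; rewrite !inE.
      case: (x =P i) => [->|/eqP xi] //=; case: (x =P j) => [->|/eqP xj] //=.
      have : (x \in f :\ i :\ j) = (x \in [set w]) by rewrite Hw.
      by rewrite !inE xi xj.
    by exists w => //; rewrite inE wi wj -fe fE.
  - move=> [w]; rewrite inE => /and3P[wi wj wE] ->.
    by split => //; rewrite !inE !eqxx /= ?orbT.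
rewrite /codegree E card_in_imset; last first.
  move=> w1 w2; rewrite !inE => /and3P[w1i w1j _] /and3P[w2i w2j _] H.
  have : w1 \in [set i; j; w2] by rewrite -H !inE eqxx ?orbT.
  by rewrite !inE (negPf w1i) (negPf w1j) /= => /eqP.
have memW : forall w, (w \in W) = [&& val w != val i, val w != val j &
     [|| val i < m, val j < m | val w < m] && [|| m <= val i, m <= val j | m <= val w]].
  move=> w; rewrite inE !val_eqE.
  case: (w =P i) => //= /eqP wi; case: (w =P j) => //= /eqP wj.
  by rewrite inE card3 // eqxx /= !meet3 !inE.
have ij0 := ij.
move: ij; rewrite -val_eqE => ij.
rewrite /base.
case: (ltnP i m) => im; case: (ltnP j m) => jm /=.
- transitivity #|V2 m n|; last exact: card_V2.
  apply: eq_card => w; rewrite memW inE.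
  by rewrite /=; apply/idP/idP; lia.
- have -> : #|W| = #|[set: 'I_(m+n)] :\ i :\ j|.
    by apply: eq_card => w; rewrite memW !inE -!val_eqE /=; apply/idP/idP; lia.
  have := cardsD1 i [set: 'I_(m+n)]; rewrite (cardsD1 j ([set: 'I_(m+n)] :\ i)).
  rewrite !inE cardsT card_ord eq_sym ij0 ?andbT => H.
  have H2 : forall a b : nat, a = 1 + (1 + b) -> b = a - 2 by lia.
  exact: (H2 _ _ H).
- have -> : #|W| = #|[set: 'I_(m+n)] :\ i :\ j|.
    by apply: eq_card => w; rewrite memW !inE -!val_eqE /=; apply/idP/idP; lia.
  have := cardsD1 i [set: 'I_(m+n)]; rewrite (cardsD1 j ([set: 'I_(m+n)] :\ i)).
  rewrite !inE cardsT card_ord eq_sym ij0 ?andbT => H.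
  have H2 : forall a b : nat, a = 1 + (1 + b) -> b = a - 2 by lia.
  exact: (H2 _ _ H).
- transitivity #|V1 m n|; last exact: card_V1.
  apply: eq_card => w; rewrite memW inE.
  by rewrite /=; apply/idP/idP; lia.
Qed.

Lemma codeg_del m n (e : {set 'I_(m+n)}) (i j : 'I_(m+n)) : i != j ->
  e \in complete_bip3 m n ->
  codegree (complete_bip3 m n :\ e) i j = (base m n i j - ((i \in e) && (j \in e)))%N.
Proof.
move=> ij eE; rewrite -codeg_full // /codegree.
rewrite (cardsD1 e [set f in complete_bip3 m n | (i \in f) && (j \in f)]).
have -> : (e \in [set f in complete_bip3 m n | i \in f & j \in f]) = (i \in e) && (j \in e).
  by rewrite inE eE.
rewrite addKn; apply: eq_card => f; rewrite !inE.
by case: (f =P e) => //=.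
Qed.

Local Open Scope ring_scope.

Lemma poly_eq_large (R : realFieldType) (p q : {poly R}) (N : R) :
  (forall x : R, N < x -> p.[x] = q.[x]) -> p = q.
Proof.
move=> H; apply/eqP; rewrite -subr_eq0; apply/negPn/negP => nz.
pose rs := [seq N + 1 + i%:R | i <- iota 0 (size (p - q))].
have Hall : all (root (p - q)) rs.
  apply/allP => x /mapP[i _ ->]; rewrite /root hornerD hornerN H ?subrr //.
  by rewrite -addrA ltrDl ltr_wpDr ?ltr01 ?ler0n.
have Hu : uniq rs.
  rewrite map_inj_uniq ?iota_uniq // => i j /addrI /eqP; rewrite eqr_nat => /eqP.
  done.
have := max_poly_roots nz Hall Hu.
by rewrite size_map size_iota ltnn.
Qed.

Lemma char_poly_horner (R : comNzRingType) k (A : 'M[R]_k) (x : R) :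
  (char_poly A).[x] = \det (x%:M - A).
Proof.
rewrite /char_poly -horner_evalE -det_map_mx; congr (\det _).
apply/matrixP => i j; rewrite !mxE /= horner_evalE.
rewrite hornerD hornerN hornerC; congr (_ - _).
by case: (i == j); rewrite /= ?mulr1n ?mulr0n ?hornerX ?horner0.
Qed.

Definition clsN m n (e : {set 'I_(m+n)}) (i : 'I_(m+n)) : nat :=
  if (i < m)%N then (if i \in e then 0 else 1)%N else (if i \in e then 2 else 3)%N.
Arguments clsN {m n}.

Definition cls m n (e : {set 'I_(m+n)}) (i : 'I_(m+n)) : 'I_4 := inord (clsN e i).
Arguments cls {m n}.

Lemma clsK m n (e : {set 'I_(m+n)}) i : val (cls e i) = clsN e i.
Proof. by rewrite /cls /= inordK // /clsN; case: ifP; case: ifP. Qed.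

Definition KN (R : nzRingType) (mR nR : R) (p q : nat) : R :=
  2 * (if (p < 2)%N && (q < 2)%N then nR else if (1 < p)%N && (1 < q)%N then mR
       else mR + nR - 2) - 1 - 2 * (~~ odd p && ~~ odd q)%:R.

Definition dN (R : nzRingType) (mR nR x : R) (p : nat) : R :=
  match p with 0 => x - (2 * nR - 3) | 1 => x - (2 * nR - 1)
  | 2 => x - (2 * mR - 3) | _ => x - (2 * mR - 1) end.

Arguments KN {R}.
Arguments dN {R}.

Definition sN (m n p : nat) : nat :=
  match p with 0 => 2 | 1 => m - 2 | 2 => 1 | _ => n - 1 end.

Lemma class_sizes m n (e : {set 'I_(m+n)}) (p : 'I_4) :
  #|e :&: V1 m n| = 2%N -> #|e :&: V2 m n| = 1%N ->
  #|[pred i | cls e i == p]| = sN m n (val p).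
Proof.
move=> h1 h2.
have E : forall i, (cls e i == p) = (clsN e i == val p) by move=> i; rewrite -val_eqE clsK.
case: p E => [[|[|[|[|p]]]] Hp] E; rewrite [sN _ _ _]/=; last by [].
- transitivity #|e :&: V1 m n|; last exact: h1.
  apply: eq_card => i; rewrite !inE E /clsN.
  by case: ifP; case: ifP.
- transitivity #|V1 m n :\: e|; last by rewrite cardsD setIC h1 card_V1.
  apply: eq_card => i; rewrite !inE E /clsN.
  by case: ifP; case: ifP.
- transitivity #|e :&: V2 m n|; last exact: h2.
  apply: eq_card => i; rewrite !inE E /clsN [(m <= _)%N]leqNgt.
  by case: ifP; case: ifP.
- transitivity #|V2 m n :\: e|; last by rewrite cardsD setIC h2 card_V2.
  apply: eq_card => i; rewrite !inE E /clsN [(m <= _)%N]leqNgt.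
  by case: ifP; case: ifP.
Qed.

Lemma natcast_base (R : nzRingType) m n (a b c : bool) : (3 <= m)%N -> (2 <= n)%N ->
  ((if a && b then n else if ~~ a && ~~ b then m else m + n - 2) - c)%N%:R
  = (if a && b then n%:R else if ~~ a && ~~ b then m%:R else m%:R + n%:R - 2) - c%:R :> R.
Proof.
move=> h1 h2.
have sub : forall u v : nat, (v <= u)%N -> (u - v)%:R = u%:R - v%:R :> R.
  by move=> u v uv; rewrite natrB.
case: a; case: b => /=; rewrite sub ?sub ?natrD //; try lia; by case: c.
Qed.

Lemma seidel_entry (R : realFieldType) m n e (x : R) :
  (3 <= m)%N -> (2 <= n)%N -> e \in complete_bip3 m n ->
  x%:M - seidel_matrix R (complete_bip3 m n :\ e) =
  \matrix_(i, j) ((i == j)%:R * dN m%:R n%:R x (val (cls e i))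
                  + KN m%:R n%:R (val (cls e i)) (val (cls e j))).
Proof.
move=> h1 h2 eE; apply/matrixP => i j; rewrite !mxE !clsK.
case: (eqVneq i j) => [<-|ij].
  rewrite /clsN; case: ifP => _; case: ifP => _; rewrite /dN /KN /=; ring.
rewrite codeg_del // /base ![(m <= _)%N]leqNgt natcast_base //.
rewrite /clsN; case: (i < m)%N; case: (j < m)%N; case: (i \in e); case: (j \in e);
  rewrite /KN /=; ring.
Qed.


Lemma det_at (R : realFieldType) (m n : nat) (e : {set 'I_(m + n)}) (x : R) :
  (3 <= m)%N -> (2 <= n)%N ->
  e \in complete_bip3 m n ->
  #|e :&: V1 m n| = 2%N -> #|e :&: V2 m n| = 1%N ->
  2 * m%:R + 2 * n%:R < x ->
  \det (x%:M - seidel_matrix R (complete_bip3 m n :\ e))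
  = (('X - (2 * n%:R - 1)%:P) ^+ (m - 3)
    * ('X - (2 * m%:R - 1)%:P) ^+ (n - 2)
    * (- xi2 R m n)).[x].
Proof.
move=> h1 h2 eE c1 c2 hx.
have m0 : 0 <= m%:R :> R by rewrite ler0n.
have n0 : 0 <= n%:R :> R by rewrite ler0n.
pose d (p : 'I_4) := dN m%:R n%:R x (val p).
pose K : 'M[R]_4 := \matrix_(p, q) KN m%:R n%:R (val p) (val q).
have dnz : forall p, d p != 0.
  move=> [[|[|[|[|p]]]] Hp] //; rewrite /d /dN /=; apply/eqP; lra.
rewrite seidel_entry //.
have -> : \matrix_(i, j) ((i == j)%:R * dN m%:R n%:R x (val (cls e i))
                  + KN m%:R n%:R (val (cls e i)) (val (cls e j)))
    = \matrix_(i, j) ((i == j)%:R * d (cls e i) + K (cls e i) (cls e j)) :> 'M_(m + n).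
  by apply/matrixP => i j; rewrite !mxE.
rewrite class_det //.
under eq_bigr do rewrite class_sizes //.
pose fQ (a b : nat) := (a == b)%:R * dN m%:R n%:R x a + (sN m n a)%:R * KN m%:R n%:R a b.
have -> : \matrix_(p, q) ((p == q)%:R * d p + #|[pred i | cls e i == p]|%:R * K p q)
    = \matrix_(p, q) fQ (val p) (val q) :> 'M_4.
  by apply/matrixP => p q; rewrite !mxE class_sizes // -val_eqE.
rewrite det4 /= !big_ord_recl !big_ord0 /= /bump /=.
rewrite /d /fQ /dN /KN /sN /= /bump /=.
have em : (m - 2)%:R = m%:R - 2 :> R by rewrite natrB //; lia.
have en : (n - 1)%:R = n%:R - 1 :> R by rewrite natrB //; lia.
rewrite em en.
have -> : (x - (2 * n%:R - 1)) ^+ (m - 2) = (x - (2 * n%:R - 1)) ^+ (m - 3) * (x - (2 * n%:R - 1)).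
  by rewrite -exprSr; congr (_ ^+ _); lia.
have -> : (x - (2 * m%:R - 1)) ^+ (n - 1) = (x - (2 * m%:R - 1)) ^+ (n - 2) * (x - (2 * m%:R - 1)).
  by rewrite -exprSr; congr (_ ^+ _); lia.
rewrite !hornerM hornerN !horner_exp !hornerXsubC.
rewrite /xi2 !hornerD !hornerM !hornerC ?hornerXn ?hornerX.
have z0 : x - (2 * n%:R - 3) != 0 by apply/eqP; lra.
have z1 : x - (2 * n%:R - 1) != 0 by apply/eqP; lra.
have z2 : x - (2 * m%:R - 3) != 0 by apply/eqP; lra.
have z3 : x - (2 * m%:R - 1) != 0 by apply/eqP; lra.
set P1 := _ ^+ (m - 3).
set P2 := _ ^+ (n - 2).
clearbody P1 P2.
field.
by rewrite z0 z1 z2 z3.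
Qed.

Theorem theorem2p8 (R : realFieldType) (m n : nat) (e : {set 'I_(m + n)}) :
  (3 <= m)%N -> (2 <= n)%N ->
  e \in complete_bip3 m n ->
  #|e :&: V1 m n| = 2%N -> #|e :&: V2 m n| = 1%N ->
  char_poly (seidel_matrix R (complete_bip3 m n :\ e))
  = ('X - (2 * n%:R - 1)%:P) ^+ (m - 3)
    * ('X - (2 * m%:R - 1)%:P) ^+ (n - 2)
    * (- xi2 R m n).
Proof.
move=> h1 h2 eE c1 c2.
apply: (@poly_eq_large R _ _ (2 * m%:R + 2 * n%:R)) => x hx.
by rewrite char_poly_horner det_at.
Qed.
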